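(* Let $d\ge1$ and $L\ge2$ be integers and $W_1,\dots,W_L\in\mathbb{R}^{d\times d}$. Let $\alpha=\max\{\max_{1\le l\le L-1}\|W_l\|_2,\,1\}$, $\beta=\|W_L\|_2$, and $\phi=\max\{\|W_{L:1}\|_2,\,e/\sqrt{L},\,1\}$. Let $D_l=W_{l+1}^\intercal W_{l+1}-W_lW_l^\intercal$ for $l=1,\dots,L-1$, and suppose $\|D_l\|_2\le\delta$ for $l=1,\dots,L-2$ and $\|I+D_{L-1}\|_2\le\varepsilon$, where $\delta\le(2L^3\phi^2)^{-1}$ and $\varepsilon\le(4L^2)^{-1}$. Then $$\alpha^{2(L-1)}<L\phi^2\qquad\text{and}\qquad\alpha^{2(L-1)}\beta^2<2\phi^2.$$
   Context: $W_{L:1}=W_LW_{L-1}\cdots W_1$. $\|\cdot\|_2$ is the spectral norm; $e$ is Euler's number. *)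

(* Defs.v *)
From HB Require Import structures.
From mathcomp Require Import all_boot all_order all_algebra.
From mathcomp Require Import all_classical all_reals all_analysis.
Set Implicit Arguments. Unset Strict Implicit. Unset Printing Implicit Defensive.
Import Order.TTheory GRing.Theory Num.Theory.
Local Open Scope ring_scope.
Local Open Scope classical_set_scope.

Definition vnorm2 (R : realType) (n : nat) (x : 'cV[R]_n) : R :=
  Num.sqrt (\sum_(i < n) x i 0 ^+ 2).

Definition specnorm (R : realType) (m n : nat) (A : 'M[R]_(m, n)) : R :=
  sup [set r : R | exists x : 'cV[R]_n, vnorm2 x = 1 /\ r = vnorm2 (A *m x)].

Fixpoint mxprod (R : realType) (d : nat) (W : nat -> 'M[R]_d) (k : nat) : 'M[R]_d :=
  match k with
  | 0 => 1%:M
  | k'.+1 => W k'.+1 *m mxprod W k'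
  end.

(* Main.v *)
Require Import Defs.
From HB Require Import structures.
From mathcomp Require Import all_boot all_order all_algebra.
From mathcomp Require Import all_classical all_reals all_analysis.
From mathcomp Require Import ring lra.
Import Order.TTheory GRing.Theory Num.Theory.
Local Open Scope ring_scope.



Section Arith.
Variable R : realType.

Lemma powle (a b : R) n : 0 <= a -> a <= b -> a ^+ n <= b ^+ n.
Proof.
move=> ha hab; apply: lerXn2r => //; rewrite nnegrE //; exact: le_trans hab.
Qed.

Lemma bern (g : R) n : 0 <= g -> (1 + g) ^+ n * (1 - n%:R * g) <= 1.
Proof.
move=> hg; elim: n => [|n IH]; first by rewrite expr0 mul0r subr0 mulr1.
rewrite exprS -natr1.
have h1 : 0 <= (1 + g) ^+ n by apply: exprn_ge0; lra.
have hn : 0 <= n%:R :> R by rewrite ler0n.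
have h2 : (1 + g) * (1 - (n%:R + 1) * g) <= 1 - n%:R * g by nra.
have -> : (1 + g) * (1 + g) ^+ n * (1 - (n%:R + 1) * g)
   = (1 + g) ^+ n * ((1 + g) * (1 - (n%:R + 1) * g)) by ring.
apply: le_trans IH; exact: ler_wpM2l.
Qed.

Lemma expb (t : R) n : (0 < n)%N -> 0 <= t -> (1 + t / n%:R) ^+ n <= expR t.
Proof.
move=> hn ht.
have hx : 0 < n%:R :> R by rewrite ltr0n.
have -> : expR t = expR (t / n%:R) ^+ n.
  by rewrite -expRM_natl mulrC -mulrA mulVf ?mulr1 // gt_eqF.
apply: powle; last exact: expR_ge1Dx.
have : 0 <= t / n%:R by apply: divr_ge0 => //; exact: ltW.
lra.
Qed.

Lemma poly1 (u : R) : 0 < u -> u <= 1/2 ->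
  1 - u < (3/2 - (1-u)^+2*u - u/4) * (1 - (1-u)^+2*u).
Proof. move=> h1 h2. nra. Qed.
Lemma poly2 (u : R) : 0 < u -> u <= 1/2 ->
  (1-u)^+2*u + (1-u)*u/2 < (1 - (1-u)^+2*u - u/4) * (1 - 2*((1-u)^+2*u)).
Proof. move=> h1 h2. nra. Qed.


Lemma aux1 (u : R) : 0 < u -> (1 - u) * u / 4 <= u / 4. Proof. move=> h; nra. Qed.
Lemma aux2 (u : R) : 0 < u -> u <= 1/2 -> 0 < 3/2 - (1 - u) ^+ 2 * u - u / 4. Proof. move=> h1 h2; nra. Qed.
Lemma aux3 (u : R) : 0 < u -> u <= 1/2 -> 0 < 1 - (1 - u) ^+ 2 * u - u / 4. Proof. move=> h1 h2; nra. Qed.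
Lemma aux4 (u : R) : 0 < u -> u <= 1/2 -> 0 < 1 - 2 * ((1 - u) ^+ 2 * u). Proof. move=> h1 h2; nra. Qed.
Lemma aux5 (e : R) : 2 <= e -> e * (2 + 1/8) < 2 * e ^+ 2. Proof. move=> h; nra. Qed.

Lemma final (n : nat) (phi A B b D eps : R) :
  (0 < n)%N ->
  let x := n%:R in let u := (x + 1)^-1 in
  1 <= phi -> expR 1 ^+ 2 <= (x + 1) * phi ^+ 2 ->
  0 <= A -> A <= Num.max 1 b ->
  0 <= B -> B <= b - 1 + eps ->
  0 <= D -> 2 * D <= (x - 1) * u ^+ 3 ->
  0 <= eps -> eps <= u ^+ 2 / 4 ->
  (forall eta, 0 < eta -> 1 + eps <= b - 2 * D - eta ->
     (b - 2 * D - eta) ^+ n * (b - 2 * D - eta - 1 - eps) <= phi ^+ 2) ->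
  A ^+ n < (x + 1) * phi ^+ 2 /\ A ^+ n * B < 2 * phi ^+ 2.
Proof.
move=> hn x u hphi hphie hA0 hA hB0 hB hD0 hD he0 he hch.
have hx1 : 1 <= x by rewrite /x ler1n.
have hxu1 : (x + 1) * u = 1 by rewrite /u mulfV // gt_eqF //; lra.
have hu0 : 0 < u by rewrite /u invr_gt0; lra.
have hxu : x * u = 1 - u by lra.
have hu2 : u <= 1/2 by nra.
have hE2 : 2 <= expR 1 :> R by have := expR_ge1Dx (1 : R); lra.
have hphi2 : 1 <= phi ^+ 2 by nra.
have hq4 := aux4 u hu0 hu2.
have hq0 : 0 <= (1 - u) ^+ 2 * u by apply: mulr_ge0; [exact: sqr_ge0 | lra].
have hAn0 : 0 <= A ^+ n by exact: exprn_ge0.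
set eta := u ^+ 3.
have heta : 0 < eta by rewrite /eta exprn_gt0.
set g := 2 * D + eta.
set c := b - 2 * D - eta.
have hcg : c = b - g by rewrite /c /g; ring.
set p := x * g.
have hg0 : 0 <= g by rewrite /g; lra.
have hgx : g <= x * u ^+ 3 by rewrite /g /eta; lra.
have hp : p <= (1 - u) ^+ 2 * u.
  have -> : (1 - u) ^+ 2 * u = x * (x * u ^+ 3) by rewrite -hxu; ring.
  by rewrite /p; apply: ler_wpM2l => //; lra.
have hp0 : 0 <= p by rewrite /p; apply: mulr_ge0 => //; lra.
have hxe : x * eps <= (1 - u) * u / 4.
  have -> : (1 - u) * u / 4 = x * (u ^+ 2 / 4) by rewrite -hxu; ring.
  by apply: ler_wpM2l => //; lra.
have hbern := bern g n hg0.
have hbc : 1 <= c -> 0 <= 1 - p -> b ^+ n * (1 - p) <= c ^+ n.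
  move=> hc1 hp1.
  have hb0 : 0 <= b by lra.
  have hb : b <= c * (1 + g).
    have : 0 <= (c - 1) * g by apply: mulr_ge0; lra.
    have -> : c * (1 + g) = c + g + (c - 1) * g by ring.
    lra.
  have h1 : b ^+ n <= c ^+ n * (1 + g) ^+ n.
    rewrite -exprMn; apply: powle => //.
  have hc0 : 0 <= c ^+ n by apply: exprn_ge0; lra.
  apply: (le_trans (ler_wpM2r hp1 h1)).
  rewrite -mulrA -[X in _ <= X]mulr1; apply: ler_wpM2l => //.
split.
- have [hb|hb] := lerP b (1 + (3/2) / x).
  + have hM : Num.max 1 b <= 1 + (3/2) / x.
      rewrite ge_max hb andbT.
      have : 0 <= (3/2) / x by apply: divr_ge0; lra.
      lra.
    have h1 : A ^+ n <= (1 + (3/2) / x) ^+ n by apply: powle => //; exact: le_trans hM.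
    have h2 : (1 + (3/2) / x) ^+ n <= expR (3/2) by apply: expb => //; lra.
    have h3 : expR (3/2) < expR 1 ^+ 2 :> R.
      by rewrite expr2 -expRD ltr_expR; lra.
    apply: (le_lt_trans h1); apply: (le_lt_trans h2).
    exact: lt_le_trans h3 hphie.
  + have hxb : 3/2 < x * (b - 1).
      have : (3/2) / x < b - 1 by lra.
      have e : x * ((3/2) / x) = 3/2 by field; lra.
      by move=> h; rewrite -[X in X < _]e ltr_pM2l //; lra.
    set y := c - 1 - eps.
    have hY : 3/2 - (1 - u) ^+ 2 * u - u / 4 <= x * y.
      have -> : x * y = x * (b - 1) - p - x * eps by rewrite /y hcg /p; ring.
      have := aux1 u hu0; lra.
    have hP : 1 - (1 - u) ^+ 2 * u <= 1 - p by lra.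
    have hpos := poly1 u hu0 hu2.
    have hY0 := aux2 u hu0 hu2.
    have hxy : 1 - u < x * y * (1 - p).
      apply: (lt_le_trans hpos); apply: ler_pM => //; lra.
    have hy0 : 0 < y.
      have hx0 : 0 < x by lra.
      have : 0 < x * y by lra.
      by rewrite pmulr_rgt0.
    have hkey : 1 < (x + 1) * y * (1 - p).
      have : x < x * ((x + 1) * y * (1 - p)).
        have -> : x * ((x + 1) * y * (1 - p)) = (x + 1) * (x * y * (1 - p)) by ring.
        have ex : (x + 1) * (1 - u) = x by rewrite mulrBr mulr1 hxu1; lra.
        by rewrite -[X in X < _]ex ltr_pM2l //; lra.
      by rewrite ltr_pMr //; lra.
    have hc1 : 1 + eps <= c by rewrite /y in hy0; lra.
    have hch' := hch eta heta hc1.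
    have hp1 : 0 <= 1 - p by lra.
    have hbc' := hbc (ltac:(lra)) hp1.
    have hAb : A ^+ n <= b ^+ n.
      apply: powle => //; apply: (le_trans hA); rewrite ge_max lexx; lra.
    have hbn : 0 < b ^+ n by apply: exprn_gt0; lra.
    apply: (le_lt_trans hAb).
    have h1 : b ^+ n < b ^+ n * ((x + 1) * y * (1 - p)) by rewrite ltr_pMr.
    apply: (lt_le_trans h1).
    have -> : b ^+ n * ((x + 1) * y * (1 - p)) = (x + 1) * y * (b ^+ n * (1 - p)) by ring.
    have hxy0 : 0 <= (x + 1) * y by apply: mulr_ge0; lra.
    apply: (le_trans (ler_wpM2l hxy0 hbc')).
    rewrite -mulrA; apply: ler_wpM2l; first lra.
    by rewrite mulrC.
- have [hb|hb] := lerP b (1 + 1 / x).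
  + have hM : Num.max 1 b <= 1 + 1 / x.
      rewrite ge_max hb andbT.
      have : 0 <= 1 / x by apply: divr_ge0; lra.
      lra.
    have h1 : A ^+ n <= (1 + 1 / x) ^+ n by apply: powle => //; exact: le_trans hM.
    have h2 : (1 + 1 / x) ^+ n <= expR 1 by apply: expb => //; lra.
    have h2' : A ^+ n <= expR 1 by apply: (le_trans h1); apply: h2.
    have hBx : B <= 1 / x + eps by lra.
    have h4 : A ^+ n * B <= expR 1 * (1 / x + eps) by apply: ler_pM.
    apply: (le_lt_trans h4).
    have hk : (x + 1) * (1 / x + eps) <= 2 + 1/8.
      have -> : (x + 1) * (1 / x + eps) = 1 + 1 / x + (x + 1) * eps.
        by field; lra.
      have : 1 / x <= 1 by rewrite mul1r invf_le1 //; lra.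
      have : (x + 1) * eps <= u / 4.
        have ee : (x + 1) * (u ^+ 2 / 4) = (x + 1) * u * u / 4 by ring.
        rewrite hxu1 mul1r in ee; rewrite -ee.
        by apply: ler_wpM2l; lra.
      lra.
    have hk2 : (x + 1) * (expR 1 * (1 / x + eps)) < (x + 1) * (2 * phi ^+ 2).
      have : (x + 1) * (expR 1 * (1 / x + eps)) = expR 1 * ((x + 1) * (1 / x + eps)) by ring.
      move=> ->.
      have : expR 1 * ((x + 1) * (1 / x + eps)) <= expR 1 * (2 + 1/8).
        by apply: ler_wpM2l; lra.
      have := aux5 _ hE2; lra.
    by rewrite ltr_pM2l in hk2; lra.
  + have hxb : 1 < x * (b - 1).
      have : 1 / x < b - 1 by lra.
      have e : x * (1 / x) = 1 by field; lra.
      by move=> h; rewrite -[X in X < _]e ltr_pM2l //; lra.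
    set y := c - 1 - eps.
    have hY : 1 - (1 - u) ^+ 2 * u - u / 4 <= x * y.
      have -> : x * y = x * (b - 1) - p - x * eps by rewrite /y hcg /p; ring.
      have := aux1 u hu0; lra.
    have hP : 1 - 2 * ((1 - u) ^+ 2 * u) <= 1 - 2 * p by lra.
    have hpos := poly2 u hu0 hu2.
    have hY0 := aux3 u hu0 hu2.
    have hP0 := aux4 u hu0 hu2.
    have hxy : p + 2 * (x * eps) < x * y * (1 - 2 * p).
      apply: (le_lt_trans _ (lt_le_trans hpos _)); first lra.
      apply: ler_pM => //; lra.
    have hy0 : 0 < y.
      have hx0 : 0 < x by lra.
      have : 0 < x * y by lra.
      by rewrite pmulr_rgt0.
    have hkey : y + g + 2 * eps < 2 * y * (1 - p).
      have : x * (y + g + 2 * eps) < x * (2 * y * (1 - p)).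
        have -> : x * (y + g + 2 * eps) = x * y + p + 2 * (x * eps) by rewrite /p; ring.
        have -> : x * (2 * y * (1 - p)) = x * y + x * y * (1 - 2 * p) by ring.
        lra.
      by rewrite ltr_pM2l; lra.
    have hc1 : 1 + eps <= c by rewrite /y in hy0; lra.
    have hch' := hch eta heta hc1.
    have hp1 : 0 <= 1 - p by lra.
    have hbc' := hbc (ltac:(lra)) hp1.
    have hAb : A ^+ n <= b ^+ n.
      apply: powle => //; apply: (le_trans hA); rewrite ge_max lexx; lra.
    have hbn : 0 < b ^+ n by apply: exprn_gt0; lra.
    have hBy : B <= y + g + 2 * eps by rewrite /y hcg; lra.
    have h1 : A ^+ n * B <= b ^+ n * (y + g + 2 * eps) by apply: ler_pM.
    apply: (le_lt_trans h1).
    have h2 : b ^+ n * (y + g + 2 * eps) < b ^+ n * (2 * y * (1 - p)) by rewrite ltr_pM2l.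
    apply: (lt_le_trans h2).
    have -> : b ^+ n * (2 * y * (1 - p)) = 2 * y * (b ^+ n * (1 - p)) by ring.
    have hy2 : 0 <= 2 * y by lra.
    apply: (le_trans (ler_wpM2l hy2 hbc')).
    rewrite -mulrA; apply: ler_wpM2l; first lra.
    by rewrite mulrC.
Qed.

End Arith.



Section CS.
Variable R : realType.

Lemma CSf (n : nat) (f g : 'I_n -> R) :
  (\sum_i f i * g i) ^+ 2 <= (\sum_i f i ^+ 2) * (\sum_i g i ^+ 2).
Proof.
set A := \sum_i f i ^+ 2; set B := \sum_i f i * g i; set C := \sum_i g i ^+ 2.
have hC0 : 0 <= C by apply: sumr_ge0 => i _; exact: sqr_ge0.
have E : \sum_i (C * f i - B * g i) ^+ 2 = C * (A * C - B ^+ 2).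
  have -> : \sum_i (C * f i - B * g i) ^+ 2 =
     \sum_i (C ^+ 2 * f i ^+ 2) - \sum_i (2 * C * B * (f i * g i)) + \sum_i (B ^+ 2 * g i ^+ 2).
    rewrite -sumrB -big_split; apply: eq_bigr => i _ /=. clear hC0; move: (f i) (g i) => a b; clearbody A B C; ring.
  rewrite -!mulr_sumr -/A -/B -/C; ring.
have H : 0 <= C * (A * C - B ^+ 2).
  by rewrite -E; apply: sumr_ge0 => i _; exact: sqr_ge0.
have [hC|hC] := eqVneq C 0.
  have hg : forall i, g i = 0.
    move=> i; have := psumr_eq0P (fun i _ => sqr_ge0 (g i)) hC (i:=i) isT.
    by move/eqP; rewrite sqrf_eq0 => /eqP.
  have -> : B = 0 by rewrite /B big1 // => i _; rewrite hg mulr0.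
  by rewrite expr0n /= hC mulr0.
have hCp : 0 < C by rewrite lt_def hC hC0.
nra.
Qed.

End CS.

Section Vec.
Variables (R : realType) (d : nat).
Implicit Types (x y z : 'cV[R]_d) (A : 'M[R]_d).

Definition sq x := \sum_(i < d) x i 0 ^+ 2.
Definition ip x y := \sum_(i < d) x i 0 * y i 0.

Lemma sqE x : sq x = ip x x.
Proof. by apply: eq_bigr => i _; rewrite expr2. Qed.
Lemma sq_ge0 x : 0 <= sq x.
Proof. by apply: sumr_ge0 => i _; exact: sqr_ge0. Qed.
Lemma ipC x y : ip x y = ip y x.
Proof. by apply: eq_bigr => i _; rewrite mulrC. Qed.
Lemma ipE x y : ip x y = (x^T *m y) 0 0.
Proof. by rewrite mxE; apply: eq_bigr => i _; rewrite mxE. Qed.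
Lemma ip_mul x A y : ip x (A *m y) = ip (A^T *m x) y.
Proof. by rewrite !ipE trmx_mul trmxK mulmxA. Qed.
Lemma ipDr x y z : ip x (y + z) = ip x y + ip x z.
Proof. by rewrite /ip -big_split; apply: eq_bigr => i _; rewrite mxE mulrDr. Qed.
Lemma ipNr x y : ip x (- y) = - ip x y.
Proof. by rewrite /ip -sumrN; apply: eq_bigr => i _; rewrite mxE mulrN. Qed.
Lemma ipZr x k y : ip x (k *: y) = k * ip x y.
Proof. by rewrite /ip mulr_sumr; apply: eq_bigr => i _; rewrite mxE mulrCA. Qed.
Lemma sqZ k x : sq (k *: x) = k ^+ 2 * sq x.
Proof. by rewrite !sqE ipZr (ipC (k *: x)) ipZr mulrA -expr2. Qed.
Lemma CS x y : ip x y ^+ 2 <= sq x * sq y.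
Proof. exact: CSf. Qed.

Lemma gram A y : sq (A *m y) = ip y ((A^T *m A) *m y).
Proof. by rewrite sqE ip_mul ipC mulmxA. Qed.

Lemma gramT A y : sq (A^T *m y) = ip y ((A *m A^T) *m y).
Proof. by rewrite gram trmxK. Qed.

Lemma sq0 x : sq x = 0 -> x = 0.
Proof.
move=> h; apply/matrixP => i j; rewrite (ord1 j) mxE.
have := psumr_eq0P (fun i _ => sqr_ge0 (x i 0)) h (i:=i) isT.
by move/eqP; rewrite sqrf_eq0 => /eqP.
Qed.

Lemma sq_zero : sq 0 = 0.
Proof. by rewrite /sq big1 // => i _; rewrite mxE expr0n. Qed.

Lemma vn_unit x : vnorm2 x = 1 <-> sq x = 1.
Proof.
split => h.
  by rewrite -(sqr_sqrtr (sq_ge0 x)); rewrite /vnorm2 in h; rewrite -/(sq x) in h; rewrite h expr1n.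
by rewrite /vnorm2 -/(sq x) h sqrtr1.
Qed.

Hypothesis hd : (0 < d)%N.

Definition e0 : 'cV[R]_d := \col_i ((i == Ordinal hd)%:R).

Lemma sq_e0 : sq e0 = 1.
Proof.
rewrite /sq (bigD1 (Ordinal hd)) //= big1 => [|i hi]; first by rewrite mxE eqxx expr1n addr0.
by rewrite mxE (negbTE hi) expr0n.
Qed.

Definition Kb A := \sum_(i < d) \sum_(j < d) A i j ^+ 2.

Lemma sq_bound A x : sq x = 1 -> sq (A *m x) <= Kb A.
Proof.
move=> hx; rewrite /sq /Kb; apply: ler_sum => i _; rewrite mxE.
have := @CSf R d (fun j => A i j) (fun j => x j 0).
by rewrite -/(sq x) hx mulr1.
Qed.

Lemma has_ub_spec A :
  has_ubound [set r : R | exists x : 'cV[R]_d, vnorm2 x = 1 /\ r = vnorm2 (A *m x)].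
Proof.
exists (Num.sqrt (Kb A)) => r [x [hx ->]].
by rewrite /vnorm2 ler_sqrt ?(le_trans (sq_ge0 (A *m x))) //; apply: sq_bound; apply/vn_unit.
Qed.

Lemma spec_ub A x : sq x = 1 -> vnorm2 (A *m x) <= specnorm A.
Proof.
move=> hx; apply: (ub_le_sup (has_ub_spec A)); exists x; split => //; exact/vn_unit.
Qed.

Lemma spec_ge0 A : 0 <= specnorm A.
Proof. exact: le_trans (sqrtr_ge0 _) (spec_ub A e0 sq_e0). Qed.

Lemma spec_sq A x : sq x = 1 -> sq (A *m x) <= specnorm A ^+ 2.
Proof.
move=> hx; have h := spec_ub A x hx.
have h0 : 0 <= vnorm2 (A *m x) by exact: sqrtr_ge0.
rewrite -(sqr_sqrtr (sq_ge0 (A *m x))) -/(vnorm2 _).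
by apply: powle.
Qed.

Lemma spec_sqg A x : sq (A *m x) <= specnorm A ^+ 2 * sq x.
Proof.
have [h0|h0] := eqVneq (sq x) 0.
  by rewrite (sq0 x h0) mulmx0 sq_zero mulr0.
have hp : 0 < sq x by rewrite lt_def h0 sq_ge0.
set k := (Num.sqrt (sq x))^-1.
have hk2 : k ^+ 2 = (sq x)^-1 by rewrite /k exprVn sqr_sqrtr // sq_ge0.
have hu : sq (k *: x) = 1 by rewrite sqZ hk2 mulVf.
have := spec_sq A (k *: x) hu; rewrite -scalemxAr sqZ hk2.
move=> h; have := ler_wpM2r (sq_ge0 x) h.
by rewrite mulrAC mulVf // mul1r.
Qed.

Lemma spec_le A M : (forall x, sq x = 1 -> sq (A *m x) <= M) -> specnorm A ^+ 2 <= M.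
Proof.
move=> h.
have hM : 0 <= M by apply: le_trans (h _ sq_e0); exact: sq_ge0.
have hS : specnorm A <= Num.sqrt M.
  apply: ge_sup.
    by exists (vnorm2 (A *m e0)), e0; split => //; exact/vn_unit/sq_e0.
  move=> r [x [hx ->]]; rewrite /vnorm2 ler_sqrt //; apply: h; exact/vn_unit.
rewrite -(sqr_sqrtr hM); apply: powle => //; exact: spec_ge0.
Qed.

Lemma spec_approx A eta : 0 < eta -> exists x, sq x = 1 /\ specnorm A ^+ 2 - eta < sq (A *m x).
Proof.
move=> he.
set S := specnorm A.
have hS0 : 0 <= S := spec_ge0 A.
have [hn|hn] := ltrP (S ^+ 2 - eta) 0.
  by exists e0; split; [exact: sq_e0 | exact: lt_le_trans hn (sq_ge0 _)].
set t := Num.sqrt (S ^+ 2 - eta).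
have ht0 : 0 <= t by exact: sqrtr_ge0.
have ht2 : t ^+ 2 = S ^+ 2 - eta by rewrite sqr_sqrtr.
have htS : t < S by nra.
have hpos : 0 < S - t by rewrite subr_gt0.
have hsup : has_sup [set r : R | exists x : 'cV[R]_d, vnorm2 x = 1 /\ r = vnorm2 (A *m x)].
  split; last exact: has_ub_spec.
  by exists (vnorm2 (A *m e0)), e0; split => //; exact/vn_unit/sq_e0.
have [r [x [hx ->]] hr] := sup_adherent hpos hsup.
have hr' : specnorm A - (S - t) < vnorm2 (A *m x) := hr.
exists x; split; first exact/vn_unit.
have hr2 : t < vnorm2 (A *m x) by move: hr'; rewrite -/S; lra.
rewrite -ht2 -(sqr_sqrtr (sq_ge0 (A *m x))).
have : 0 <= vnorm2 (A *m x) by exact: sqrtr_ge0.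
rewrite /vnorm2 -/(sq _) in hr2 *.
nra.
Qed.

Lemma trans_bound A y : sq y = 1 -> sq (A^T *m y) <= specnorm A ^+ 2.
Proof.
move=> hy.
have e1 : sq (A^T *m y) = ip y (A *m (A^T *m y)) by rewrite sqE ip_mul trmxK ipC.
move: e1; set z := A^T *m y => e1.
have h1 : sq z ^+ 2 <= sq (A *m z) by rewrite e1; have := CS y (A *m z); rewrite hy mul1r.
have h2 := spec_sqg A z.
have h0 := sq_ge0 z.
have hS := spec_ge0 A.
nra.
Qed.

Lemma quad_bound D y : sq y = 1 ->
  - specnorm D <= ip y (D *m y) <= specnorm D.
Proof.
move=> hy.
have h1 := CS y (D *m y); rewrite hy mul1r in h1.
have h2 := spec_sq D y hy.
have hS := spec_ge0 D.
apply/andP; split; nra.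
Qed.

Lemma layer (V W : 'M[R]_d) y :
  sq (W *m y) = sq (V^T *m y) + ip y ((W^T *m W - V *m V^T) *m y).
Proof.
rewrite gram gramT -ipDr -mulmxDl; congr ip; congr (_ *m _).
by rewrite addrC subrK.
Qed.

Lemma layer_last (V W : 'M[R]_d) y :
  sq (W *m y) = ip y ((1%:M + (W^T *m W - V *m V^T)) *m y) + sq (V^T *m y) - sq y.
Proof.
rewrite gram gramT sqE -ipDr -ipNr -ipDr; congr ip.
by rewrite !mulmxDl mulNmx mul1mx (addrC y) addrAC addrK subrK.
Qed.

Lemma normalize (V : 'M[R]_d) y : sq y = 1 -> 0 < sq (V *m y) ->
  let t := sq (V *m y) in
  let y' := (Num.sqrt t)^-1 *: (V *m y) in
  [/\ sq y' = 1, V *m y = Num.sqrt t *: y' & t <= sq (V^T *m y')].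
Proof.
move=> hy ht t y'.
have hs : 0 < Num.sqrt t by rewrite sqrtr_gt0.
have hk2 : ((Num.sqrt t)^-1) ^+ 2 = t^-1 by rewrite exprVn sqr_sqrtr // ltW.
split.
- by rewrite /y' sqZ hk2 mulVf // gt_eqF.
- by rewrite /y' scalerA mulfV ?scale1r // gt_eqF.
- rewrite /y' -scalemxAr sqZ hk2.
  have e1 : t = ip y ((V^T *m V) *m y) by rewrite /t gram.
  have h1 : t ^+ 2 <= sq (V^T *m (V *m y)).
    by rewrite {1}e1 mulmxA; have := CS y ((V^T *m V) *m y); rewrite hy mul1r.
  rewrite -(ler_pM2l ht) mulrA mulfV ?gt_eqF // mul1r.
  by rewrite -expr2.
Qed.


Section Chain.
Variable W : nat -> 'M[R]_d.
Let DD l := (W l.+1)^T *m W l.+1 - W l *m (W l)^T.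

Lemma upper m del :
  (forall l, (1 <= l <= m)%N -> specnorm (DD l) <= del) ->
  forall l, (l <= m)%N -> specnorm (W l.+1) ^+ 2 <= specnorm (W 1) ^+ 2 + l%:R * del.
Proof.
move=> hD; elim => [|l IH] hl; first by rewrite mul0r addr0.
apply: spec_le => y hy.
rewrite (layer (W l.+1)).
have h1 := trans_bound (W l.+1) y hy.
have /andP [_ h2] := quad_bound (DD l.+1) y hy.
have h3 := hD l.+1 hl.
have h4 := IH (ltnW hl).
rewrite -natr1 mulrDl mul1r.
rewrite /DD in h2 h3.
lra.
Qed.

Lemma last_upper m eps :
  specnorm (1%:M + DD m.+1) <= eps ->
  specnorm (W m.+2) ^+ 2 <= specnorm (W m.+1) ^+ 2 - 1 + eps.
Proof.
move=> hE; apply: spec_le => y hy.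
rewrite (layer_last (W m.+1)) hy.
have h1 := trans_bound (W m.+1) y hy.
have /andP [_ h2] := quad_bound (1%:M + DD m.+1) y hy.
rewrite /DD in h2 hE.
lra.
Qed.

Lemma chain m del eps c :
  (forall l, (1 <= l <= m)%N -> specnorm (DD l) <= del) ->
  specnorm (1%:M + DD m.+1) <= eps ->
  1 + eps <= c ->
  (exists x0, sq x0 = 1 /\ c + m%:R * del <= sq (W 1 *m x0)) ->
  c ^+ m.+1 * (c - 1 - eps) <= specnorm (mxprod W m.+2) ^+ 2.
Proof.
move=> hD hE hce [x0 [hx0 h0]].
have he0 : 0 <= eps by apply: le_trans hE; exact: spec_ge0.
have hc : 0 < c by lra.
have hdel : (0 < m)%N -> 0 <= del.
  by move=> hm; apply: le_trans (hD 1%N _); [exact: spec_ge0 | apply/andP; split].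
have Q : forall j, (j <= m)%N -> exists x y r,
    [/\ sq x = 1, sq y = 1, mxprod W j *m x = r *: y, c ^+ j <= r ^+ 2
      & c + (m - j)%:R * del <= sq (W j.+1 *m y)].
  elim => [|j IH] hj.
    exists x0, x0, 1; split => //.
    - by rewrite /= mul1mx scale1r.
    - by rewrite expr0 expr1n.
    - by rewrite subn0.
  have [x [y [r [hx hy hxy hr hW]]]] := IH (ltnW hj).
  have hmj : 0 <= (m - j)%:R * del.
    by apply: mulr_ge0; [exact: ler0n | apply: hdel; exact: leq_ltn_trans hj].
  have ht : 0 < sq (W j.+1 *m y) by lra.
  have [hy' hWy hT] := normalize (W j.+1) y hy ht.
  move: hy' hWy hT hW.
  set t := sq (W j.+1 *m y).
  set y' := (Num.sqrt t)^-1 *: (W j.+1 *m y) => hy' hWy hT hW.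
  have ht0 : 0 <= t by exact: ltW.
  exists x, y', (r * Num.sqrt t); split => //.
  - by rewrite /= -mulmxA hxy -scalemxAr hWy scalerA.
  - rewrite exprMn sqr_sqrtr // exprSr.
    have hcj : 0 <= c ^+ j by apply: exprn_ge0; lra.
    apply: ler_pM => //; lra.
  - rewrite (layer (W j.+1)).
    have /andP [h2 _] := quad_bound (DD j.+1) y' hy'.
    have h3 := hD j.+1 hj.
    have em : (m - j = (m - j.+1).+1)%N by rewrite subnSK.
    rewrite em -natr1 mulrDl mul1r in hW.
    rewrite /DD in h2 h3.
    lra.
have [x [y [r [hx hy hxy hr hW]]]] := Q m (leqnn m).
rewrite subnn mul0r addr0 in hW.
have ht : 0 < sq (W m.+1 *m y) by lra.
have [hy' hWy hT] := normalize (W m.+1) y hy ht.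
move: hy' hWy hT hW.
set t := sq (W m.+1 *m y).
set y' := (Num.sqrt t)^-1 *: (W m.+1 *m y) => hy' hWy hT hW.
have ht0 : 0 <= t by exact: ltW.
have hS := spec_sq (mxprod W m.+2) x hx.
have E : mxprod W m.+2 *m x = (r * Num.sqrt t) *: (W m.+2 *m y').
  rewrite /= -!mulmxA.
  change (W m.+2 *m (W m.+1 *m (mxprod W m *m x)) = (r * Num.sqrt t) *: (W m.+2 *m y')).
  by rewrite hxy -scalemxAr hWy scalerA scalemxAr.
rewrite E sqZ exprMn sqr_sqrtr // in hS.
apply: le_trans hS.
have hlast : c - 1 - eps <= sq (W m.+2 *m y').
  rewrite (layer_last (W m.+1)) hy'.
  have /andP [h2 _] := quad_bound (1%:M + DD m.+1) y' hy'.
  rewrite /DD in h2 hE.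
  lra.
rewrite exprSr.
have hcm : 0 <= c ^+ m by apply: exprn_ge0; lra.
apply: ler_pM => //.
- by apply: mulr_ge0 => //; lra.
- lra.
- by apply: ler_pM => //; lra.
Qed.

End Chain.

End Vec.



Theorem lemma7 (R : realType) (d L : nat) (W : nat -> 'M[R]_d) (delta eps : R) :
  (1 <= d)%N -> (2 <= L)%N ->
  let alpha := \big[Num.max/1]_(1 <= l < L) specnorm (W l) in
  let beta := specnorm (W L) in
  let phi := Num.max (Num.max (specnorm (mxprod W L)) (expR 1 / Num.sqrt (L%:R))) 1 in
  let D := fun l : nat => (W l.+1)^T *m W l.+1 - W l *m (W l)^T in
  (forall l : nat, (1 <= l <= L - 2)%N -> specnorm (D l) <= delta) ->
  specnorm (1%:M + D (L - 1)%N) <= eps ->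
  delta <= (2 * L%:R ^+ 3 * phi ^+ 2)^-1 ->
  eps <= (4 * L%:R ^+ 2)^-1 ->
  alpha ^+ (2 * (L - 1)) < L%:R * phi ^+ 2 /\
  alpha ^+ (2 * (L - 1)) * beta ^+ 2 < 2 * phi ^+ 2.
Proof.
move=> hd; case: L => [|[|m]] // _.
move=> alpha beta phi D hD hE hdel heps.
rewrite !subSS !subn0 in hD.
rewrite subSS subn0 in hE.
rewrite subSS subn0.
have hDD : forall l, (1 <= l <= m)%N ->
  specnorm ((W l.+1)^T *m W l.+1 - W l *m (W l)^T) <= delta := hD.
have hEE : specnorm (1%:M + ((W m.+2)^T *m W m.+2 - W m.+1 *m (W m.+1)^T)) <= eps := hE.
set s1 := specnorm (W 1) ^+ 2.
set b := s1 + m%:R * delta.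
have hdel0 : (0 < m)%N -> 0 <= delta.
  by move=> hm; apply: le_trans (hDD 1%N _); [exact: spec_ge0 | apply/andP; split].
have hmd : 0 <= m%:R * delta.
  case: m {hD hE hDD hEE b hdel0 hdel heps alpha beta phi D} (hdel0) => [|m] h; first by rewrite mul0r.
  by apply: mulr_ge0; [exact: ler0n | exact: h].
have hup := @upper R d hd W m delta hDD.
have hsl : forall l, (l <= m)%N -> specnorm (W l.+1) ^+ 2 <= b.
  move=> l hl; apply: le_trans (hup l hl) _; rewrite /b lerD2l.
  have [->|hne] := eqVneq l m; first by [].
  have hlt : (l < m)%N by rewrite ltn_neqAle hne hl.
  apply: ler_wpM2r; first by apply: hdel0; exact: leq_ltn_trans hlt.
  by rewrite ler_nat.
have hphi1 : 1 <= phi by rewrite /phi le_max lexx orbT.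
have hphiS : specnorm (mxprod W m.+2) <= phi by rewrite /phi !le_max lexx.
have hphiE : expR 1 / Num.sqrt (m.+2)%:R <= phi by rewrite /phi !le_max lexx orbT.
have hLpos : 0 < (m.+2)%:R :> R by rewrite ltr0n.
have hphie2 : expR 1 ^+ 2 <= ((m.+1)%:R + 1) * phi ^+ 2.
  rewrite natr1.
  have hq0 : 0 <= expR 1 / Num.sqrt (m.+2)%:R :> R.
    by apply: divr_ge0; [exact: ltW (expR_gt0 _) | exact: sqrtr_ge0].
  have := @powle R _ _ 2 hq0 hphiE.
  rewrite exprMn exprVn sqr_sqrtr; last exact: ltW.
  move=> h; have := ler_wpM2l (ltW hLpos) h.
  by rewrite mulrCA mulfV ?gt_eqF // mulr1.
have hA : 0 <= alpha /\ alpha ^+ 2 <= Num.max 1 b.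
  rewrite /alpha big_nat_cond; apply: (big_ind (fun v => 0 <= v /\ v ^+ 2 <= Num.max 1 b)).
  - by split; [exact: ler01 | rewrite expr1n le_max lexx].
  - move=> u v [hu1 hu2] [hv1 hv2]. by rewrite /Order.max; case: ifP => _; split.
  - move=> i /andP [/andP [hi1 hi2] _].
    case: i hi1 hi2 => // l _ hl.
    split; first exact: spec_ge0.
    by apply: le_trans (hsl l hl) _; rewrite le_max lexx orbT.
have hB : beta ^+ 2 <= b - 1 + eps.
  have := @last_upper R d hd W m eps hEE; have := hsl m (leqnn m); rewrite /beta; lra.
have hB0 : 0 <= beta ^+ 2 by exact: sqr_ge0.
have hA0 : 0 <= alpha ^+ 2 by exact: sqr_ge0.
have hu : ((m.+1)%:R + 1 : R)^-1 = ((m.+2)%:R)^-1 by rewrite natr1.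
have hD2 : 2 * (m%:R * delta) <= ((m.+1)%:R - 1) * ((m.+1)%:R + 1)^-1 ^+ 3.
  have -> : (m.+1)%:R - 1 = m%:R :> R by rewrite -natr1 addrK.
  rewrite hu.
  have h1 : (2 * (m.+2)%:R ^+ 3 * phi ^+ 2)^-1 <= (2 * (m.+2)%:R ^+ 3)^-1.
    have hL3 : 0 < (m.+2)%:R ^+ 3 :> R := exprn_gt0 _ hLpos.
    have hP2 : 1 <= phi ^+ 2.
      by have := ler_pM ler01 ler01 hphi1 hphi1; rewrite mul1r -expr2.
    have p1 : 0 < 2 * (m.+2)%:R ^+ 3 :> R by apply: mulr_gt0.
    have p2 : 0 < 2 * (m.+2)%:R ^+ 3 * phi ^+ 2 by apply: mulr_gt0 => //; lra.
    rewrite lef_pV2 ?posrE // -[X in X <= _]mulr1; apply: ler_wpM2l => //; exact: ltW.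
  have h2 : (2 * (m.+2)%:R ^+ 3)^-1 = ((m.+2)%:R^-1) ^+ 3 / 2 :> R.
    by rewrite invfM exprVn mulrC.
  have h3 : 2 * delta <= ((m.+2)%:R^-1) ^+ 3.
    move: (le_trans hdel h1); rewrite h2. move: (_ ^+ 3) => q; lra.
  rewrite mulrCA; apply: ler_wpM2l => //; exact: ler0n.
have he0 : 0 <= eps by apply: le_trans hE; exact: spec_ge0.
have heps' : eps <= ((m.+1)%:R + 1)^-1 ^+ 2 / 4.
  have e4 : ((m.+2)%:R ^-1) ^+ 2 / 4 = (4 * (m.+2)%:R ^+ 2)^-1 :> R by rewrite invfM exprVn mulrC.
  by rewrite hu e4.
have hch : forall eta, 0 < eta -> 1 + eps <= b - 2 * (m%:R * delta) - eta ->
    (b - 2 * (m%:R * delta) - eta) ^+ m.+1 * (b - 2 * (m%:R * delta) - eta - 1 - eps) <= phi ^+ 2.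
  move=> eta heta hc.
  have [x0 [hx0 h0]] := @spec_approx R d hd (W 1) eta heta.
  have hx : exists x0, sq R d x0 = 1 /\ b - 2 * (m%:R * delta) - eta + m%:R * delta <= sq R d (W 1 *m x0).
    by exists x0; split => //; rewrite /b; rewrite -/s1 in h0; lra.
  apply: le_trans (@chain R d hd W m delta eps _ hDD hEE hc hx) _.
  by apply: powle => //; exact: spec_ge0.
have [h1 h2] := @final R m.+1 phi (alpha ^+ 2) (beta ^+ 2) b (m%:R * delta) eps (ltn0Sn m)
  hphi1 hphie2 hA0 (proj2 hA) hB0 hB hmd hD2 he0 heps' hch.
rewrite natr1 in h1.
by rewrite exprM; split.
Qed.
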